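(* Let $(\alpha_n)_{n\in\mathbb{N}^+}$ be a sequence in $(0,1)$ converging to $\alpha\in(0,1)$, with continued fraction expansions $\alpha_n=[0;a_{n1},a_{n2},\dots]$ and $\alpha=[0;a_1,a_2,\dots]$, and write $\alpha_n=[0;a_{n1},\dots,a_{ni},r_{ni}]$, $\alpha=[0;a_1,\dots,a_i,r_i]$. Suppose that for some $i\in\mathbb{N}^+$ the numbers $a_{n1},\dots,a_{ni}$ ($n\in\mathbb{N}^+$) are bounded, and that there are numbers $R_{i,\min},R_{i,\max}$ with $1<R_{i,\min}\le r_{ni}\le R_{i,\max}<\infty$ for all $n$. Then there is $n_0\in\mathbb{N}^+$ such that for each $1\le j\le i$, $a_{nj}$ is independent of $n$ for $n>n_0$, and $a_j=\lim_{\nu\to\infty}a_{\nu j}$; in particular $a_j=a_{nj}$ for all sufficiently large $n$.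
   Context: Continued fraction conventions: $[a_0;a_1,\dots,a_n]$ denotes $a_0+1/(a_1+1/(a_2+\cdots+1/a_n))$ with $a_0\in\mathbb{Z}$, $a_k\in\mathbb{N}^+$ for $1\le k<n$, and (for uniqueness) last element $a_n>1$. Every real number is identified with its unique continued fraction; a terminating expansion $[a_0;a_1,\dots,a_n]$ is also written as the nonterminating form $[a_0;a_1,\dots,a_n,0,0,\dots]$ (i.e. $a_i=0$ for $i>n$), with $[a_0;0,0,\dots]=a_0$. For $\alpha=[a_0;a_1,a_2,\dots]$ and $i\ge1$, the truncated form is $\alpha=[a_0;a_1,\dots,a_i,r_i]$ where $r_i:=a_{i+1}+[0;a_{i+2},a_{i+3},\dots]$. *)

(* Defs.v *)
From Stdlib Require Import Reals ZArith.
Open Scope R_scope.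

(* Continued fraction expansion by the standard (Gauss) algorithm.
   cf_quot x k = Some t_k, the k-th complete quotient of x:
     t_0 = x,  t_{k+1} = 1 / (t_k - floor t_k)  if t_k is not an integer;
   None once the expansion has terminated.  This produces exactly the unique
   expansion of the context (last element > 1 for terminating expansions). *)
Definition frac_part (t : R) : R := t - IZR (Int_part t).

Fixpoint cf_quot (x : R) (k : nat) : option R :=
  match k with
  | O => Some x
  | S k' =>
      match cf_quot x k' with
      | Some t => if Req_EM_T (frac_part t) 0 then None else Some (/ frac_part t)
      | None => None
      end
  end.

(* k-th partial quotient a_k of x = [a_0; a_1, a_2, ...]; a_k = 0 beyond the end
   of a terminating expansion. *)
Definition cf_digit (x : R) (k : nat) : Z :=
  match cf_quot x k with
  | Some t => Int_part t
  | None => 0%Z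
  end.

(* r_i := a_{i+1} + [0; a_{i+2}, a_{i+3}, ...] ( = complete quotient t_{i+1};
   equals 0 when the expansion terminated at an index <= i, consistently with
   the convention a_k = 0 and [0;0,0,...] = 0). *)
Definition cf_rem (x : R) (i : nat) : R :=
  match cf_quot x (S i) with
  | Some t => t
  | None => 0
  end.

(* Main.v *)
Require Import Defs.
From Stdlib Require Import Reals ZArith Lra Lia.
Open Scope R_scope.

Definition qv (x : R) (k : nat) : R :=
  match cf_quot x k with Some t => t | None => 0 end.

Lemma quot_S x k : cf_quot x (S k) <> None ->
  cf_quot x k <> None /\ Defs.frac_part (qv x k) <> 0 /\ qv x (S k) = / Defs.frac_part (qv x k).
Proof.
  unfold qv; simpl. destruct (cf_quot x k) as [t|]; [|intro H; congruence].
  destruct (Req_dec_T (Defs.frac_part t) 0); [intro H; congruence|]. intros _. split; [discriminate|]. auto.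
Qed.

Lemma quot_S' x k : cf_quot x k <> None -> Defs.frac_part (qv x k) <> 0 ->
  cf_quot x (S k) <> None /\ qv x (S k) = / Defs.frac_part (qv x k).
Proof.
  unfold qv; simpl. destruct (cf_quot x k) as [t|]; [|intro H; congruence].
  destruct (Req_dec_T (Defs.frac_part t) 0); [intros _ H; congruence|]. intros _ _. split; [discriminate|]. auto.
Qed.

Lemma quot_down x m k : (k <= m)%nat -> cf_quot x m <> None -> cf_quot x k <> None.
Proof.
  induction 1; auto. intros H0. apply IHle. apply (quot_S x m H0).
Qed.

Lemma digit_qv x k : cf_quot x k <> None -> cf_digit x k = Int_part (qv x k).
Proof. unfold cf_digit, qv. destruct (cf_quot x k); intro H; [reflexivity | congruence]. Qed.

Lemma ip_bounds t : IZR (Int_part t) <= t < IZR (Int_part t) + 1.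
Proof. destruct (base_Int_part t). lra. Qed.

Lemma frac_bounds t : 0 <= Defs.frac_part t < 1.
Proof. unfold Defs.frac_part. destruct (ip_bounds t). lra. Qed.

Lemma ip_unique t z : IZR z <= t < IZR z + 1 -> Int_part t = z.
Proof.
  intros [H1 H2]. destruct (ip_bounds t) as [H3 H4].
  assert (A: (Int_part t < z + 1)%Z). { apply lt_IZR. rewrite plus_IZR. lra. }
  assert (B: (z < Int_part t + 1)%Z). { apply lt_IZR. rewrite plus_IZR. lra. }
  lia.
Qed.

Lemma Un_cv_ev (u v : nat -> R) l N : (forall n, (n >= N)%nat -> u n = v n) -> Un_cv v l -> Un_cv u l.
Proof.
  intros H Hv e He. destruct (Hv e He) as [M HM]. exists (Nat.max N M).
  intros n Hn. rewrite H by lia. apply HM; lia.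
Qed.

Lemma cv_const l : Un_cv (fun _ => l) l.
Proof. intros e He. exists 0%nat. intros. unfold R_dist. rewrite Rminus_diag, Rabs_R0. lra. Qed.

Lemma step (x : nat -> R) (X d : R) :
  Un_cv x X -> 0 < d ->
  (forall n, (1 <= n)%nat -> d <= Defs.frac_part (x n) <= 1 - d) ->
  Defs.frac_part X <> 0 /\
  (exists N, (1 <= N)%nat /\ forall n, (n >= N)%nat -> Int_part (x n) = Int_part X) /\
  Un_cv (fun n => / Defs.frac_part (x n)) (/ Defs.frac_part X).
Proof.
  intros Hcv Hd Hf.
  destruct (Hcv d Hd) as [N0 HN0].
  assert (HI : forall n, (n >= S N0)%nat -> Int_part (x n) = Int_part X /\ IZR (Int_part X) < X).
  { intros n Hn. specialize (HN0 n ltac:(lia)). specialize (Hf n ltac:(lia)).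
    unfold R_dist in HN0. apply Rabs_def2 in HN0. unfold Defs.frac_part in Hf.
    assert (E : Int_part X = Int_part (x n)) by (apply ip_unique; lra).
    rewrite E. split; [reflexivity|lra]. }
  destruct (HI (S N0) (le_n _)) as [_ HX].
  split. { unfold Defs.frac_part. lra. }
  split. { exists (S N0). split; [lia|]. intros n Hn. apply HI; auto. }
  set (z := IZR (Int_part X)) in *.
  apply Un_cv_ev with (v := fun n => / (x n - z)) (N := S N0).
  { intros n Hn. unfold Defs.frac_part. destruct (HI n Hn) as [E _]. rewrite E. reflexivity. }
  replace (/ Defs.frac_part X) with ((fun y => / (y - z)) X) by reflexivity.
  apply continuity_seq with (f := fun y => / (y - z)); [|exact Hcv].
  change (continuity_pt (/ (fun y => y - z)) X).
  apply continuity_pt_inv; [|lra].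
  change (continuity_pt (id - fct_cte z)%F X).
  apply continuity_pt_minus.
  - apply derivable_continuous_pt, derivable_pt_id.
  - apply continuity_pt_const. intros a b. reflexivity.
Qed.
Lemma inv_gt1 f : 0 < f < 1 -> 1 < / f.
Proof.
  intros H. assert (Hi : 0 < / f) by (apply Rinv_0_lt_compat; lra).
  assert (E : f * / f = 1) by (field; lra). nra.
Qed.

Theorem lemma1 (alpha_ : nat -> R) (alpha : R) (i : nat) (Rmin Rmax : R) :
  (forall n : nat, (1 <= n)%nat -> 0 < alpha_ n < 1) ->
  0 < alpha < 1 ->
  Un_cv alpha_ alpha ->
  (1 <= i)%nat ->
  (exists B : Z, forall n j : nat, (1 <= n)%nat -> (1 <= j <= i)%nat ->
       (cf_digit (alpha_ n) j <= B)%Z) ->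
  1 < Rmin ->
  (forall n : nat, (1 <= n)%nat -> Rmin <= cf_rem (alpha_ n) i <= Rmax) ->
  exists n0 : nat, (1 <= n0)%nat /\
    forall j : nat, (1 <= j <= i)%nat ->
      (forall n m : nat, (n > n0)%nat -> (m > n0)%nat ->
          cf_digit (alpha_ n) j = cf_digit (alpha_ m) j) /\
      Un_cv (fun nu => IZR (cf_digit (alpha_ nu) j)) (IZR (cf_digit alpha j)) /\
      (forall n : nat, (n > n0)%nat -> cf_digit alpha j = cf_digit (alpha_ n) j).
Proof.
  intros Hal Ha Hcv Hi [B HB] Hmin Hr.
  assert (Hdef : forall n k, (1 <= n)%nat -> (k <= S i)%nat -> cf_quot (alpha_ n) k <> None).
  { intros n k Hn Hk. apply (quot_down _ (S i)); auto.
    specialize (Hr n Hn). unfold cf_rem in Hr. intro E. rewrite E in Hr. lra. }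
  assert (Hrec : forall n k, (1 <= n)%nat -> (k <= i)%nat ->
     Defs.frac_part (qv (alpha_ n) k) <> 0 /\
     qv (alpha_ n) (S k) = / Defs.frac_part (qv (alpha_ n) k)).
  { intros n k Hn Hk. destruct (quot_S (alpha_ n) k (Hdef n (S k) Hn ltac:(lia))) as [_ [A1 A2]].
    auto. }
  assert (HrS : forall n, (1 <= n)%nat -> Rmin <= qv (alpha_ n) (S i) <= Rmax).
  { intros n Hn. exact (Hr n Hn). }
  assert (Hgt1 : forall n k, (1 <= n)%nat -> (1 <= k <= i)%nat -> 1 < qv (alpha_ n) k).
  { intros n k Hn Hk. destruct k as [|k]; [lia|].
    destruct (Hrec n k Hn ltac:(lia)) as [A1 A2]. rewrite A2.
    apply inv_gt1. destruct (frac_bounds (qv (alpha_ n) k)). lra. }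
  assert (Hip1 : forall n k, (1 <= n)%nat -> (1 <= k <= i)%nat ->
     1 <= IZR (Int_part (qv (alpha_ n) k)) <= IZR B).
  { intros n k Hn Hk. pose proof (Hgt1 n k Hn Hk).
    destruct (ip_bounds (qv (alpha_ n) k)).
    assert (P : (0 < Int_part (qv (alpha_ n) k))%Z) by (apply lt_0_IZR; lra).
    split. { apply IZR_le. lia. }
    apply IZR_le. rewrite <- digit_qv by (apply Hdef; lia). apply HB; lia. }
  set (C := Rmax + Rabs (IZR B) + 1).
  assert (HC : forall n k, (1 <= n)%nat -> (1 <= k <= S i)%nat -> 1 <= qv (alpha_ n) k <= C).
  { intros n k Hn Hk. pose proof (RRle_abs (IZR B)).
    destruct (Nat.eq_dec k (S i)) as [->|Hne].
    - specialize (HrS n Hn). unfold C. pose proof (Rabs_pos (IZR B)). lra.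
    - pose proof (Hgt1 n k Hn ltac:(lia)). pose proof (Hip1 n k Hn ltac:(lia)).
      destruct (ip_bounds (qv (alpha_ n) k)). unfold C. split; [lra|].
      pose proof (Hr n Hn). lra. }
  assert (HCpos : 1 <= C).
  { unfold C. pose proof (Rabs_pos (IZR B)). pose proof (Hr 1%nat (le_n _)). lra. }
  set (c := Rbasic_fun.Rmin Rmin (1 + / C)).
  assert (Hc1 : 1 < c).
  { unfold c. apply Rmin_glb_lt; [lra|]. assert (0 < / C) by (apply Rinv_0_lt_compat; lra). lra. }
  assert (Hc : forall n k, (1 <= n)%nat -> (1 <= k <= S i)%nat -> c <= qv (alpha_ n) k).
  { intros n k Hn Hk.
    destruct (Nat.eq_dec k (S i)) as [->|Hne].
    - specialize (HrS n Hn). pose proof (Rmin_l Rmin (1 + / C)). fold c in H. lra.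
    - pose proof (Rmin_r Rmin (1 + / C)). fold c in H.
      pose proof (Hip1 n k Hn ltac:(lia)).
      destruct (Hrec n k Hn ltac:(lia)) as [A1 A2].
      pose proof (HC n (S k) Hn ltac:(lia)).
      assert (/ C <= / qv (alpha_ n) (S k)) by (apply Rinv_le_contravar; lra).
      rewrite A2, Rinv_inv in H2.
      unfold Defs.frac_part in H2. lra. }
  set (d := Rbasic_fun.Rmin (/ C) (1 - / c)).
  assert (Hd : 0 < d).
  { unfold d. apply Rmin_glb_lt. apply Rinv_0_lt_compat; lra.
    assert (/ c < 1). { rewrite <- Rinv_1. apply Rinv_lt_contravar; lra. } lra. }
  assert (Hfd : forall n k, (1 <= n)%nat -> (k <= i)%nat ->
     d <= Defs.frac_part (qv (alpha_ n) k) <= 1 - d).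
  { intros n k Hn Hk.
    destruct (Hrec n k Hn Hk) as [A1 A2].
    pose proof (HC n (S k) Hn ltac:(lia)). pose proof (Hc n (S k) Hn ltac:(lia)).
    assert (E : Defs.frac_part (qv (alpha_ n) k) = / qv (alpha_ n) (S k)).
    { rewrite A2, Rinv_inv. reflexivity. }
    rewrite E.
    assert (/ C <= / qv (alpha_ n) (S k)) by (apply Rinv_le_contravar; lra).
    assert (/ qv (alpha_ n) (S k) <= / c) by (apply Rinv_le_contravar; lra).
    pose proof (Rmin_l (/ C) (1 - / c)). pose proof (Rmin_r (/ C) (1 - / c)).
    fold d in H3, H4. lra. }
  assert (Hind : forall k, (k <= S i)%nat ->
     cf_quot alpha k <> None /\ Un_cv (fun n => qv (alpha_ n) k) (qv alpha k) /\
     exists N, (1 <= N)%nat /\ forall n k', (n >= N)%nat -> (k' < k)%nat ->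
       cf_digit (alpha_ n) k' = cf_digit alpha k').
  { induction k as [|k IH]; intros Hk.
    - split; [discriminate|]. split; [exact Hcv|]. exists 1%nat. split; [lia|]. intros; lia.
    - destruct (IH ltac:(lia)) as [D [Cv [N [HN HN']]]].
      destruct (step (fun n => qv (alpha_ n) k) (qv alpha k) d Cv Hd
                  (fun n Hn => Hfd n k Hn ltac:(lia))) as [F [[N1 [HN1 HN1']] Cv']].
      destruct (quot_S' alpha k D F) as [D' E'].
      split; [exact D'|]. split.
      + rewrite E'. apply Un_cv_ev with (v := fun n => / Defs.frac_part (qv (alpha_ n) k)) (N := 1%nat); auto.
        intros n Hn. apply Hrec; lia.
      + exists (Nat.max N N1). split; [lia|]. intros n k' Hn Hk'.
        destruct (Nat.eq_dec k' k) as [->|Hne].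
        * rewrite !digit_qv by (auto; apply Hdef; lia). apply HN1'. lia.
        * apply HN'; lia. }
  destruct (Hind (S i) (le_n _)) as [_ [_ [N [HN HN']]]].
  exists N. split; [exact HN|]. intros j Hj.
  assert (Eq : forall n, (n > N)%nat -> cf_digit (alpha_ n) j = cf_digit alpha j).
  { intros n Hn. apply HN'; lia. }
  split; [|split].
  - intros n m Hn Hm. rewrite (Eq n Hn), (Eq m Hm). reflexivity.
  - apply Un_cv_ev with (v := fun _ => IZR (cf_digit alpha j)) (N := S N).
    + intros n Hn. simpl. rewrite Eq by lia. reflexivity.
    + apply cv_const.
  - intros n Hn. symmetry. apply Eq; lia.
Qed.
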